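(* Let $(\mathcal{C},\mathcal{B},Q,2)$ be a 2-seat STV election, counted by the procedure described in the context, with reported winners $w_1\neq w_2$. Suppose the procedure FindAuditableAssertions described in the context, run on recorded ballot data and an arbitrary real-valued cost function, does not abort and returns a set $\mathcal{A}$ of assertions. If every assertion in $\mathcal{A}$ holds for the ballots $\mathcal{B}$, then $\mathcal{A}$ rules out every alternate election result: no $2$-element set $\{c_1,c_2\}\subseteq\mathcal{C}$ with $\{c_1,c_2\}\neq\{w_1,w_2\}$ is the set of seated candidates.
   Context: An STV election is a tuple $(\mathcal{C},\mathcal{B},Q,S)$ where $\mathcal{C}$ is a finite set of candidates, $\mathcal{B}$ is a multiset of ballots (each ballot is a finite sequence of distinct candidates, in order of preference, most preferred first, not necessarily containing all candidates), $S$ is the number of seats, and $Q=\lfloor |\mathcal{B}|/(S+1)\rfloor+1$ is the quota. For a sequence $\pi$, $\mathrm{first}(\pi)$ is its first element, and for a set $X$ of candidates, $\sigma_X(\pi)$ is the subsequence of $\pi$ consisting of the elements of $X$, in order. Counting: every ballot starts with value $1$ in the pile of its first-ranked candidate; a candidate's tally is the total value of the ballots in its pile; a candidate is eligible if neither eliminated nor seated. In each round every eligible candidate with tally at least $Q$ is seated (gets a quota) and every ballot in its pile is given the transfer value $(V_c-Q)/|\mathcal{B}_c|$ (unweighted Gregory method; $V_c$ is the total value, $|\mathcal{B}_c|$ the number of ballots in the pile) and moved to the next-ranked eligible candidate on the ballot (or exhausted). If no candidate reaches a quota, the eligible candidate with smallest tally is eliminated and its ballots move at their current value to their next-ranked eligible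 candidate (or are exhausted). Counting stops when all $S$ seats are filled or the number of eligible candidates equals the number of unfilled seats, in which case all remaining eligible candidates are seated. Quantities (counts with multiplicity, computed from a given ballot multiset): $L_{\mathrm{basic}}(c)=|\{\beta:\mathrm{first}(\beta)=c\}|$; $U_{\mathrm{comp}}(c,c')=|\{\beta:\mathrm{first}(\sigma_{\{c,c'\}}(\beta))=c\}|$; $L_{\mathrm{elim}}(w,O)=|\{\beta:\mathrm{first}(\sigma_{\mathcal{C}\setminus O}(\beta))=w\}|$; for $W\subseteq\mathcal{C}$, distinct $c,b\notin W$, reals $\overline{\tau}=(\overline{\tau}_v)_{v\in W}$ and $G\subseteq\mathcal{C}$, $U_{\mathrm{complex}}(c,b,W,\overline{\tau},G)=\sum_\beta u(\beta)$ with $u(\beta)$ given by the first applicable case: $0$ if some $g\in G\setminus W$ has $\mathrm{first}(\sigma_{\{g,c\}}(\beta))=g$; $0$ if $c$ does not occur in $\beta$; $0$ if $\mathrm{first}(\sigma_{\{b,c\}}(\beta))=b$; $\max\{\overline{\tau}_v:v\in W, v\text{ precedes }c\text{ in }\beta\}$ if $\mathrm{first}(\beta)\in W$; $1$ otherwise. Assertions: $\mathsf{AG}(x,y)$ means $L_{\mathrm{basic}}(x)>U_{\mathrm{comp}}(y,x)$; $\mathsf{NL}(w,l,W,\overline{\tau},G,O)$ means $L_{\mathrm{elim}}(w,O)>U_{\mathrm{complex}}(l,w,W,\overline{\tau},G)$. An assertion ''holds for $\mathcal{B}$'' if its inequality is true when the quantities are computed from $\mathcal{B}$. Procedure (quantities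 inside it are computed from the recorded ballot data, which may differ from $\mathcal{B}$): NonWinners computes $AG_{\mathrm{rec}}=\{(x,y): x\neq y,\ \mathsf{AG}(x,y)\text{ holds for the recorded data}\}$, the set $NW$ of candidates $c$ with at least two distinct $x$ such that $(x,c)\in AG_{\mathrm{rec}}$, and for each $c\in NW$ two assertions $\mathsf{AG}(x_1,c),\mathsf{AG}(x_2,c)$ with $x_1\neq x_2$ and $(x_1,c),(x_2,c)\in AG_{\mathrm{rec}}$ (chosen to minimise the cost); these form the initial $\mathcal{A}$. Then for every unordered pair $\{c_1,c_2\}$ of distinct candidates with $\{c_1,c_2\}\neq\{w_1,w_2\}$ and $\{c_1,c_2\}\cap NW=\emptyset$, the procedure considers all $o\in\mathcal{C}\setminus\{c_1,c_2\}$ and both orderings $(x,y)\in\{(c_1,c_2),(c_2,c_1)\}$, with $O_o=\{o':(o,o')\in AG_{\mathrm{rec}}\}$ and $G_y=\{g:(g,y)\in AG_{\mathrm{rec}}\}$, and keeps those for which $\mathsf{NL}(o,y,\{x\},\overline{\tau},G_y,O_o\setminus\{x\})$ with $\overline{\tau}_x=2/3$ holds for the recorded data; if there are none it aborts, otherwise it picks one such choice (of minimal cost) and adds to $\mathcal{A}$ the assertions $\mathsf{NL}(o,y,\{x\},\overline{\tau},G_y,O_o\setminus\{x\})$ (with $\overline{\tau}_x=2/3$), $\mathsf{AG}(o,o')$ for all $o'\in O_o$, and $\mathsf{AG}(g,y)$ for all $g\in G_y$. Finally it returns $\mathcal{A}$. *)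

(* Defs.v *)
From HB Require Import structures.
From mathcomp Require Import all_boot all_order all_algebra.
Set Implicit Arguments.
Unset Strict Implicit.
Unset Printing Implicit Defensive.
Import Order.TTheory GRing.Theory Num.Theory.
Local Open Scope ring_scope.

(* Candidates are the elements of a finite type T; a ballot is a seq T
   (most preferred first); a multiset of ballots is a seq (seq T).
   Real numbers are modelled by an arbitrary real field R. *)

Section STV.
Variables (R : realFieldType) (T : finType).

Definition sigma (X : {set T}) (pi : seq T) : seq T := [seq d <- pi | d \in X].

Definition L_basic (B : seq (seq T)) (c : T) : nat :=
  count (fun beta => ohead beta == Some c) B.

Definition U_comp (B : seq (seq T)) (c c' : T) : nat :=
  count (fun beta => ohead (sigma [set c; c'] beta) == Some c) B.

Definition L_elim (B : seq (seq T)) (w : T) (O : {set T}) : nat :=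
  count (fun beta => ohead (sigma (~: O) beta) == Some w) B.

Definition u_complex (c b : T) (W : {set T}) (tau : T -> R) (G : {set T})
  (beta : seq T) : R :=
  if [exists g in G :\: W, ohead (sigma [set g; c] beta) == Some g] then 0
  else if c \notin beta then 0
  else if ohead (sigma [set b; c] beta) == Some b then 0
  else if (if ohead beta is Some f then f \in W else false) then
    (* max { tau_v : v in W, v precedes c in beta } (nonempty here) *)
    let l := [seq tau v | v <- take (index c beta) beta & v \in W] in
    \big[Num.max/head 0 l]_(t <- l) t
  else 1.

Definition U_complex (B : seq (seq T)) (c b : T) (W : {set T}) (tau : T -> R)
  (G : {set T}) : R :=
  \sum_(beta <- B) u_complex c b W tau G beta.

Inductive assertion : Type :=
| AG of T & T
| NL of T & T & {set T} & (T -> R) & {set T} & {set T}.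

Definition holds (B : seq (seq T)) (a : assertion) : Prop :=
  match a with
  | AG x y => (U_comp B y x < L_basic B x)%N
  | NL w l W tau G Ov => U_complex B l w W tau G < (L_elim B w Ov)%:R
  end.

Section Procedure.
Variable Rec : seq (seq T).

Definition AG_rec (x y : T) : bool := (x != y) && (U_comp Rec y x < L_basic Rec x)%N.

Definition NW : {set T} := [set c | (1 < #|[set x | AG_rec x c]|)%N].

Definition validNW (c : T) (p : T * T) : Prop :=
  [/\ p.1 != p.2, AG_rec p.1 c & AG_rec p.2 c].

Definition groupNW (c : T) (p : T * T) : seq assertion := [:: AG p.1 c; AG p.2 c].

Definition O_of (o : T) : {set T} := [set o' | AG_rec o o'].
Definition G_of (y : T) : {set T} := [set g | AG_rec g y].

Definition two_thirds : R := 2%:R / 3%:R.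

Definition NL_of (t : T * T * T) : assertion :=
  let: (o, x, y) := t in NL o y [set x] (fun _ => two_thirds) (G_of y) (O_of o :\ x).

Definition cand_pairs (w1 w2 : T) : {set {set T}} :=
  [set P : {set T} | [&& #|P| == 2%N, P != [set w1; w2] & [disjoint P & NW]]].

Definition validP (P : {set T}) (t : T * T * T) : Prop :=
  let: (o, x, y) := t in
  [/\ o \notin P, x \in P, y \in P, x != y & holds Rec (NL_of t)].

Definition groupP (t : T * T * T) : seq assertion :=
  let: (o, x, y) := t in
  NL_of t :: [seq AG o o' | o' <- enum (O_of o)] ++ [seq AG g y | g <- enum (G_of y)].

(* "run on recorded data Rec with cost function cost, the procedure does not
   abort and returns A" (any minimal-cost choice may be picked) *)
Definition FindAuditableAssertions (cost : seq assertion -> R) (w1 w2 : T)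
  (A : seq assertion) : Prop :=
  exists (chNW : T -> T * T) (chP : {set T} -> T * T * T),
  [/\ (forall c, c \in NW -> validNW c (chNW c) /\
         forall p, validNW c p -> cost (groupNW c (chNW c)) <= cost (groupNW c p)),
      (forall P, P \in cand_pairs w1 w2 -> validP P (chP P) /\
         forall t, validP P t -> cost (groupP (chP P)) <= cost (groupP t))
    & A = flatten [seq groupNW c (chNW c) | c <- enum NW]
          ++ flatten [seq groupP (chP P) | P <- enum (cand_pairs w1 w2)]].

End Procedure.

(* ---------------- STV counting (unweighted Gregory) ---------------- *)

Record ballot_state : Type := BSt {
  b_ballot : seq T;
  b_pile : option T;     (* the candidate whose pile holds it; None = exhausted *)
  b_val : R }.

Record stv_state : Type := StvSt {
  st_seated : {set T};
  st_elim : {set T};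
  st_piles : seq ballot_state }.

Definition eligible (s : stv_state) (c : T) : bool :=
  (c \notin st_seated s) && (c \notin st_elim s).

Definition elig_set (s : stv_state) : {set T} := [set c | eligible s c].

Definition tally (s : stv_state) (c : T) : R :=
  \sum_(b <- st_piles s | b_pile b == Some c) b_val b.

Definition npile (s : stv_state) (c : T) : nat :=
  count (fun b => b_pile b == Some c) (st_piles s).

(* next-ranked candidate after c on beta satisfying el (None = exhausted) *)
Definition next_elig (el : pred T) (beta : seq T) (c : T) : option T :=
  ohead [seq d <- drop (index c beta).+1 beta | el d].

Definition quota (S : nat) (B : seq (seq T)) : nat := (size B %/ S.+1).+1.

Definition stv_init (B : seq (seq T)) : stv_state :=
  StvSt set0 set0 [seq BSt beta (ohead beta) 1 | beta <- B].

Definition reaching (Q : nat) (s : stv_state) : {set T} :=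
  [set c | eligible s c & Q%:R <= tally s c].

Definition quota_round (Q : nat) (s : stv_state) : stv_state :=
  let E := reaching Q s in
  let seated' := st_seated s :|: E in
  let el' := fun d => (d \notin seated') && (d \notin st_elim s) in
  StvSt seated' (st_elim s)
    [seq match b_pile b with
         | Some c => if c \in E then
                       BSt (b_ballot b) (next_elig el' (b_ballot b) c)
                           ((tally s c - Q%:R) / (npile s c)%:R)
                     else b
         | None => b
         end | b <- st_piles s].

Definition elim_round (s : stv_state) (c : T) : stv_state :=
  let elim' := st_elim s :|: [set c] in
  let el' := fun d => (d \notin st_seated s) && (d \notin elim') in
  StvSt (st_seated s) elim'
    [seq if b_pile b == Some c then
           BSt (b_ballot b) (next_elig el' (b_ballot b) c) (b_val b)
         else b | b <- st_piles s].

Inductive stv_step (Q : nat) : stv_state -> stv_state -> Prop :=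
| StepQuota s : reaching Q s != set0 -> stv_step Q s (quota_round Q s)
| StepElim s c : reaching Q s = set0 -> eligible s c ->
    (forall d, eligible s d -> tally s c <= tally s d) ->
    stv_step Q s (elim_round s c).

Definition terminal (S : nat) (s : stv_state) : bool :=
  (S <= #|st_seated s|)%N || (#|elig_set s| == S - #|st_seated s|)%N.

Definition final_result (S : nat) (s : stv_state) : {set T} :=
  if (S <= #|st_seated s|)%N then st_seated s else st_seated s :|: elig_set s.

Inductive stv_count (S : nat) (B : seq (seq T)) : stv_state -> {set T} -> Prop :=
| CountStop s : terminal S s -> stv_count S B s (final_result S s)
| CountStep s s' W : ~~ terminal S s -> stv_step (quota S B) s s' ->
    stv_count S B s' W -> stv_count S B s W.

(* W is a possible set of seated candidates of the S-seat STV count of B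
   (ties for elimination may be broken arbitrarily) *)
Definition stv_outcome (S : nat) (B : seq (seq T)) (W : {set T}) : Prop :=
  stv_count S B (stv_init B) W.

End STV.

(* Main.v *)
Require Import Defs.
From Stdlib Require List.
From HB Require Import structures.
From mathcomp Require Import all_boot all_order all_algebra.
From mathcomp Require Import zify ring lra.
Import Order.TTheory GRing.Theory Num.Theory.
Local Open Scope ring_scope.

Section SeqLemmas.
Variable T : eqType.

Lemma first_filterP (a : pred T) (s : seq T) (o : T) :
  ohead [seq d <- s | a d] = Some o <->
  [/\ o \in s, a o & forall d, d \in take (index o s) s -> ~~ a d].
Proof.
elim: s => [|z s IH] /=; first by split=> // -[].
case: (eqVneq z o) => [E|nzo].
  subst z; rewrite mem_head /=; case az: (a o) => /=.
    by split => // _; split.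
  split; last by case.
  by move/IH => [_]; rewrite az.
rewrite in_cons eq_sym (negbTE nzo) /=.
case az: (a z) => /=.
  split; first by case=> E; rewrite E eqxx in nzo.
  by case=> _ _ /(_ z); rewrite mem_head az => /(_ isT).
rewrite IH; split.
  case=> h1 h2 h3; split => // d; rewrite in_cons => /orP[/eqP->|]; first by rewrite az.
  exact: h3.
case=> h1 h2 h3; split => // d hd; apply: h3; by rewrite in_cons hd orbT.
Qed.

Lemma first_filter_none (a : pred T) (s : seq T) :
  ohead [seq d <- s | a d] = None <-> (forall d, d \in s -> ~~ a d).
Proof.
elim: s => [|z s IH] //=.
case az: (a z) => /=; first by split=> // /(_ z (mem_head _ _)); rewrite az.
rewrite IH; split=> h d; last by move=> hd; apply: h; rewrite in_cons hd orbT.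
by rewrite in_cons => /orP[/eqP->|]; [rewrite az | exact: h].
Qed.

Lemma take_index_notin (s : seq T) o : o \notin take (index o s) s.
Proof.
case hs: (o \in s); first by rewrite in_take // ltnn.
by apply/negP => /mem_take; rewrite hs.
Qed.

End SeqLemmas.

Section SeqLemmas2.
Variable T : eqType.
Implicit Types (a : pred T) (s : seq T).

Lemma first_mem a s c : ohead [seq d <- s | a d] = Some c -> c \in s.
Proof. by case/first_filterP. Qed.

Lemma first_keep a a' s c : ohead [seq d <- s | a d] = Some c ->
  (forall d, a' d -> a d) -> a' c -> ohead [seq d <- s | a' d] = Some c.
Proof.
move=> /first_filterP [h1 h2 h3] sub hc; apply/first_filterP; split => // d /h3.
by apply: contra => /sub.
Qed.

Lemma first_none a a' s : ohead [seq d <- s | a d] = None ->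
  (forall d, a' d -> a d) -> ohead [seq d <- s | a' d] = None.
Proof.
move=> /first_filter_none h sub; apply/first_filter_none => d /h.
by apply: contra => /sub.
Qed.

Lemma first_move a a' s c : ohead [seq d <- s | a d] = Some c ->
  (forall d, a' d -> a d) -> ~~ a' c ->
  ohead [seq d <- s | a' d] = ohead [seq d <- drop (index c s).+1 s | a' d].
Proof.
move=> /first_filterP [h1 h2 h3] sub hc.
have ci : (index c s < size s)%N by rewrite index_mem.
rewrite -{1}(cat_take_drop (index c s) s) (drop_nth c ci) nth_index //.
rewrite filter_cat /= (negbTE hc).
have -> : [seq d <- take (index c s) s | a' d] = [::].
  apply/eqP; rewrite -[_ == _]negbK -has_filter -all_predC.
  apply/allP => d /h3 /=; by apply: contra => /sub.
by [].
Qed.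

Lemma first_after a a' s c p : ohead [seq d <- s | a d] = Some c ->
  (forall d, a' d -> a d) -> ~~ a' c ->
  ohead [seq d <- s | a' d] = Some p -> (index c s < index p s)%N.
Proof.
move=> /first_filterP [h1 h2 h3] sub hc /first_filterP [p1 p2 p3].
case: (ltngtP (index c s) (index p s)) => // H.
  have : p \in take (index c s) s by rewrite in_take.
  by move/h3; rewrite (sub _ p2).
have : nth c s (index c s) = nth c s (index p s) by rewrite H.
by rewrite !nth_index // => E; rewrite E p2 in hc.
Qed.

Lemma has_take_mono (P : pred T) s n m : (n <= m)%N -> has P (take n s) -> has P (take m s).
Proof.
move=> nm /hasP [d hd Pd]; apply/hasP; exists d => //.
have ds := mem_take hd; rewrite (in_take _ ds) in hd; rewrite (in_take _ ds); exact: leq_trans hd nm.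
Qed.

End SeqLemmas2.

Section ListLemmas.
Variables (R : realFieldType) (X Y : Type).

Lemma inL_map (f : X -> Y) (l : seq X) y : List.In y (map f l) -> exists x, List.In x l /\ y = f x.
Proof.
elim: l => [|x l IH] //= [<-|/IH [z [hz ->]]]; first by exists x; split; [left|].
by exists z; split; [right|].
Qed.

Lemma ler_sumL (l : seq X) (F G : X -> R) :
  (forall x, List.In x l -> F x <= G x) -> \sum_(x <- l) F x <= \sum_(x <- l) G x.
Proof.
elim: l => [|x l IH] h; first by rewrite !big_nil.
rewrite !big_cons lerD //; first by apply: h; left.
by apply: IH => z hz; apply: h; right.
Qed.

Lemma sumr_geL (l : seq X) (F : X -> R) :
  (forall x, List.In x l -> 0 <= F x) -> 0 <= \sum_(x <- l) F x.
Proof.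
elim: l => [|x l IH] h; first by rewrite big_nil.
rewrite big_cons addr_ge0 //; first by apply: h; left.
by apply: IH => z hz; apply: h; right.
Qed.

Lemma sum_count (l : seq X) (P : pred X) :
  \sum_(x <- l) ((P x)%:R : R) = (count P l)%:R.
Proof.
elim: l => [|x l IH]; first by rewrite big_nil.
by rewrite big_cons IH /= natrD.
Qed.

Lemma sum_ifsub (l : seq X) (P : pred X) (F : X -> R) k :
  \sum_(x <- l) (if P x then F x - k else 0) =
  \sum_(x <- l | P x) F x - (count P l)%:R * k.
Proof.
elim: l => [|x l IH]; first by rewrite !big_nil mul0r subr0.
rewrite !big_cons IH /=; case: (P x) => /=; rewrite ?add0n ?add0r //.
rewrite natrD mulrDl mul1r; ring.
Qed.

End ListLemmas.
Arguments inL_map {X Y f l y}.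
Arguments ler_sumL {R X l F G}.
Arguments sumr_geL {R X l F}.
Arguments sum_count {R X} l P.
Arguments sum_ifsub {R X} l P F k.
Arguments first_mem {T a s c}.
Arguments first_keep {T a a' s c}.
Arguments first_none {T a a' s}.
Arguments first_move {T a a' s c}.
Arguments first_after {T a a' s c p}.
Arguments has_take_mono {T P s n m}.
Arguments take_index_notin {T} s o.

Set Implicit Arguments.
Unset Strict Implicit.
Section Main.
Variables (R : realFieldType) (T : finType) (B : seq (seq T)).
Local Notation Q := (quota 2 B).
Local Notation state := (stv_state R T).
Local Notation bst := (ballot_state R T).
Local Notation tau := (two_thirds R).

Definition contrib (b : bst) : R := if b_pile b is Some _ then b_val b else 0.
Definition Tot (s : state) : R := \sum_(b <- st_piles s) contrib b.

Record inv (s : state) : Prop := Inv {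
  i1 : map (@b_ballot R T) (st_piles s) = B;
  i2 : forall b, List.In b (st_piles s) ->
         b_pile b = ohead [seq d <- b_ballot b | eligible s d];
  i3 : forall b, List.In b (st_piles s) -> 0 <= b_val b <= 1;
  i4 : forall b h, List.In b (st_piles s) -> ohead (b_ballot b) = Some h ->
         h \in st_seated s -> b_val b <= tau;
  i5 : forall b p, List.In b (st_piles s) -> b_pile b = Some p ->
         b_val b = 1 \/ has (fun d => d \in st_seated s) (take (index p (b_ballot b)) (b_ballot b));
  i6 : forall d, d \in st_seated s -> d \notin st_elim s;
  i7 : Tot s + (Q * #|st_seated s|)%N%:R <= (size B)%:R }.

Lemma sizeB_lt : (size B < 3 * Q)%N.
Proof. rewrite /quota; lia. Qed.

Lemma Q_gt0 : (0 < Q)%N. Proof. by []. Qed.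

Lemma tau_ge0 : 0 <= tau. Proof. by rewrite /two_thirds divr_ge0 ?ler0n. Qed.

Lemma elig_quota (s : state) d :
  eligible (quota_round Q s) d = eligible s d && (d \notin reaching Q s).
Proof.
rewrite /eligible /= in_setU negb_or /reaching inE /eligible.
by case: (d \in st_seated s); case: (d \in st_elim s); case: (_ <= _).
Qed.

Lemma elig_elim (s : state) c d :
  eligible (elim_round s c) d = eligible s d && (d != c).
Proof.
rewrite /eligible /= in_setU in_set1 negb_or.
by case: (d \in st_seated s); case: (d \in st_elim s); case: (d == c).
Qed.

Lemma init_inv : inv (stv_init R B).
Proof.
have EL : forall d, eligible (stv_init R B) d by move=> d; rewrite /eligible /= !inE.
split => /=.
- by rewrite -map_comp map_id.
- move=> b /inL_map [β [_ ->]] /=.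
  by have /all_filterP -> : all (eligible (stv_init R B)) β by apply/allP => d _; exact: EL.
- by move=> b /inL_map [β [_ ->]] /=; rewrite ler01 lexx.
- by move=> b h _ _; rewrite inE.
- by move=> b p /inL_map [β [_ ->]] /=; left.
- by move=> d; rewrite inE.
- rewrite cards0 muln0 addr0 /Tot big_map.
  rewrite -(count_predT B) -(sum_count B predT).
  apply: ler_sumL => β _ /=; rewrite /contrib /=; case: (ohead β) => //.
Qed.


Lemma tally_mk (s : state) c : Defs.tally s c =
  \sum_(b <- st_piles s) (if b_pile b == Some c then b_val b else 0).
Proof. by rewrite /Defs.tally big_mkcond. Qed.

Lemma size_piles s : inv s -> size (st_piles s) = size B.
Proof. by move=> I; rewrite -(i1 I) size_map. Qed.

Lemma tally_ge0 s c : inv s -> 0 <= Defs.tally s c.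
Proof.
move=> I; rewrite tally_mk; apply: sumr_geL => b hb.
by case: (_ == _) => //; case/andP: (i3 I hb).
Qed.

Lemma tally_le_npile s c : inv s -> Defs.tally s c <= (npile s c)%:R.
Proof.
move=> I; rewrite tally_mk /npile -sum_count; apply: ler_sumL => b hb.
by case: (_ == _) => //; case/andP: (i3 I hb).
Qed.

Lemma npile_le s c : inv s -> (npile s c <= size B)%N.
Proof. by move=> I; rewrite -(size_piles I) /npile count_size. Qed.

Lemma Tot_ge0 s : inv s -> 0 <= Tot s.
Proof.
move=> I; apply: sumr_geL => b hb; rewrite /contrib.
by case: (b_pile b) => //; case/andP: (i3 I hb).
Qed.

Lemma seated_le2 s : inv s -> (#|st_seated s| <= 2)%N.
Proof.
move=> I; have h1 := i7 I; have h2 := Tot_ge0 I.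
have : ((Q * #|st_seated s|)%N%:R <= (size B)%:R :> R) by apply: le_trans h1; rewrite lerDr.
rewrite ler_nat => h; have := sizeB_lt; nia.
Qed.

Lemma pile_first s b p : inv s -> List.In b (st_piles s) -> b_pile b = Some p ->
  [/\ p \in b_ballot b, eligible s p &
      forall d, d \in take (index p (b_ballot b)) (b_ballot b) -> ~~ eligible s d].
Proof. by move=> I hb hp; apply/first_filterP; rewrite -(i2 I hb). Qed.

Definition kq (s : state) c : R := (Defs.tally s c - Q%:R) / (npile s c)%:R.

Lemma reachingP (s : state) c : c \in reaching Q s = eligible s c && (Q%:R <= Defs.tally s c).
Proof. by rewrite inE. Qed.

Lemma npile_pos s c : inv s -> c \in reaching Q s -> (0 < npile s c)%N.
Proof.
move=> I; rewrite reachingP => /andP [_ h].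
have := le_trans h (tally_le_npile c I); rewrite ler_nat; apply: leq_trans.
exact: Q_gt0.
Qed.

Lemma kq_bound s c : inv s -> c \in reaching Q s -> 0 <= kq s c /\ kq s c <= tau.
Proof.
move=> I hc; have n0 := npile_pos I hc.
move: (hc); rewrite reachingP => /andP [_ hQ].
have hV := tally_le_npile c I.
have hn : (npile s c)%:R <= 3%:R * (Q%:R : R).
  by rewrite -natrM ler_nat; apply: leq_trans (npile_le c I) _; apply: ltnW; exact: sizeB_lt.
have n0' : (0 : R) < (npile s c)%:R by rewrite ltr0n.
split; first by rewrite /kq divr_ge0 // subr_ge0.
rewrite /kq ler_pdivrMr // /two_thirds.
lra.
Qed.


Lemma quota_mem (s : state) b : List.In b (st_piles (quota_round Q s)) ->
  exists b0, List.In b0 (st_piles s) /\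
   ((exists c, [/\ b_pile b0 = Some c, c \in reaching Q s &
        b = BSt (b_ballot b0) (next_elig (eligible (quota_round Q s)) (b_ballot b0) c) (kq s c)])
    \/ ((forall c, b_pile b0 = Some c -> c \notin reaching Q s) /\ b = b0)).
Proof.
move=> /inL_map [b0 [hb0 ->]]; exists b0; split => //.
case hp: (b_pile b0) => [c|]; last by right; split.
case hc: (c \in reaching Q s).
  by left; exists c; split.
by right; split => // c' [<-]; rewrite hc.
Qed.

Lemma elim_mem (s : state) c b : List.In b (st_piles (elim_round s c)) ->
  exists b0, List.In b0 (st_piles s) /\
   ((b_pile b0 = Some c /\
        b = BSt (b_ballot b0) (next_elig (eligible (elim_round s c)) (b_ballot b0) c) (b_val b0))
    \/ (b_pile b0 <> Some c /\ b = b0)).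
Proof.
move=> /inL_map [b0 [hb0 ->]]; exists b0; split => //.
case: (eqVneq (b_pile b0) (Some c)) => hp.
  by left; split.
by right; split => //; apply/eqP.
Qed.


Definition hq (s : state) (b0 : bst) : R :=
  \sum_(c in reaching Q s) (if b_pile b0 == Some c then b_val b0 - kq s c else 0).

Lemma hq_eval (s : state) b0 : hq s b0 =
  if b_pile b0 is Some c0 then (if c0 \in reaching Q s then b_val b0 - kq s c0 else 0) else 0.
Proof.
rewrite /hq; case: (b_pile b0) => [c0|]; last by rewrite big1.
case hc: (c0 \in reaching Q s).
  rewrite (bigD1 c0) //= eqxx big1 ?addr0 // => c /andP [_ ne].
  by case: eqP => // -[E]; rewrite E eqxx in ne.
rewrite big1 // => c hc'; case: eqP => // -[E]; by rewrite E hc' in hc.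
Qed.

Lemma quota_Tot s : inv s ->
  Tot (quota_round Q s) + (Q * #|reaching Q s|)%N%:R <= Tot s.
Proof.
move=> I.
have step1 : Tot (quota_round Q s) <= \sum_(b0 <- st_piles s) (contrib b0 - hq s b0).
  rewrite /Tot /= big_map; apply: ler_sumL => b0 hb0; rewrite hq_eval /contrib.
  case hp: (b_pile b0) => [c0|]; last by rewrite /= hp subr0.
  case hc: (c0 \in reaching Q s) => /=; last by rewrite hp subr0.
  have [k0 _] := kq_bound I hc.
  have -> : b_val b0 - (b_val b0 - kq s c0) = kq s c0 by rewrite opprB addrCA subrr addr0.
  by case: (next_elig _ _ _).
have step3 : \sum_(b0 <- st_piles s) hq s b0 = (Q * #|reaching Q s|)%N%:R.
  rewrite /hq exchange_big /=.
  rewrite (eq_bigr (fun _ => Q%:R)); first by rewrite sumr_const natrM mulr_natr.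
  move=> c hc; rewrite sum_ifsub -/(Defs.tally s c) -/(npile s c) /kq.
  have n0 := npile_pos I hc.
  rewrite mulrC divfK ?pnatr_eq0 -?lt0n //; lra.
rewrite sumrB step3 -/(Tot s) in step1; lra.
Qed.


Lemma tau_le1 : tau <= 1.
Proof. rewrite /two_thirds ler_pdivrMr ?ltr0n // mul1r ler_nat //. Qed.

Lemma moved_pile (s : state) (a' : pred T) b0 c : inv s -> List.In b0 (st_piles s) ->
  b_pile b0 = Some c -> (forall d, a' d -> eligible s d) -> ~~ a' c ->
  next_elig a' (b_ballot b0) c = ohead [seq d <- b_ballot b0 | a' d].
Proof.
move=> I hb hp sub nc; rewrite /next_elig; symmetry; apply: first_move sub nc.
by rewrite -(i2 I hb).
Qed.

Lemma moved_after (s : state) (a' : pred T) b0 c p : inv s -> List.In b0 (st_piles s) ->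
  b_pile b0 = Some c -> (forall d, a' d -> eligible s d) -> ~~ a' c ->
  next_elig a' (b_ballot b0) c = Some p -> (index c (b_ballot b0) < index p (b_ballot b0))%N.
Proof.
move=> I hb hp sub nc; rewrite (moved_pile I hb hp sub nc) => hp'.
by apply: first_after sub nc hp'; rewrite -(i2 I hb).
Qed.

Lemma kept_pile (s : state) (a' : pred T) b0 : inv s -> List.In b0 (st_piles s) ->
  (forall d, a' d -> eligible s d) -> (forall c, b_pile b0 = Some c -> a' c) ->
  b_pile b0 = ohead [seq d <- b_ballot b0 | a' d].
Proof.
move=> I hb sub h; case hp: (b_pile b0) => [c|].
  symmetry; apply: first_keep sub (h c hp); by rewrite -(i2 I hb).
symmetry; apply: first_none sub; by rewrite -(i2 I hb).
Qed.

Lemma quota_inv s : inv s -> inv (quota_round Q s).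
Proof.
move=> I.
have sub : forall d, eligible (quota_round Q s) d -> eligible s d.
  by move=> d; rewrite elig_quota => /andP [].
have nE : forall c, c \in reaching Q s -> ~~ eligible (quota_round Q s) c.
  by move=> c hc; rewrite elig_quota hc andbF.
split.
- rewrite /= -map_comp; apply: etrans (i1 I); apply: eq_map => b0 /=.
  by case: (b_pile b0) => // c; case: (c \in reaching Q s).
- move=> b /quota_mem [b0 [hb0 [[c [hp hc ->]]|[hn ->]]]] /=.
    exact: moved_pile I hb0 hp sub (nE c hc).
  apply: (kept_pile I hb0 sub) => c hp; rewrite elig_quota (hn c hp) andbT.
  by case: (pile_first I hb0 hp).
- move=> b /quota_mem [b0 [hb0 [[c [hp hc ->]]|[hn ->]]]] /=; last by apply: (i3 I hb0).
  have [k0 k1] := kq_bound I hc; rewrite k0 /=; exact: le_trans k1 tau_le1.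
- move=> b h /quota_mem [b0 [hb0 [[c [hp hc ->]]|[hn ->]]]] /=.
    by move=> _ _; case: (kq_bound I hc).
  move=> hh; rewrite in_setU => /orP [hs|hE]; first exact: (i4 I hb0 hh hs).
  have := i2 I hb0; move: hh; case: (b_ballot b0) => [|z β] //= [->].
  move: (hE); rewrite reachingP => /andP [-> _] /= hp.
  by move: (hn h hp); rewrite hE.
- move=> b p /quota_mem [b0 [hb0 [[c [hp hc ->]]|[hn ->]]]] /= hp'.
    right; apply/hasP; exists c; last by rewrite in_setU hc orbT.
    have cb : c \in b_ballot b0 by case: (pile_first I hb0 hp).
    by rewrite in_take //; apply: moved_after I hb0 hp sub (nE c hc) hp'.
  case: (i5 I hb0 hp') => [->|h]; [by left | right].
  by apply: sub_has h => d; rewrite in_setU => ->.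
- move=> d; rewrite /= in_setU => /orP [hs|hE]; first exact: (i6 I hs).
  by move: hE; rewrite reachingP => /andP [/andP [_ ->]].
- rewrite /= cardsU.
  have -> : st_seated s :&: reaching Q s = set0.
    apply/setP => d; rewrite !inE; apply/negP => /andP [h1 /andP [/andP [h2 _] _]].
    by rewrite h1 in h2.
  rewrite cards0 subn0 mulnDr natrD.
  have h1 := quota_Tot I; have h2 := i7 I.
  set x := Tot _ in h1 *; set y := Tot s in h1 h2.
  set u := ((Q * #|st_seated s|)%N%:R) in h2 *; set v := ((Q * #|reaching Q s|)%N%:R) in h1 *.
  clearbody x y u v; lra.
Qed.

Lemma elim_inv s c : inv s -> eligible s c -> inv (elim_round s c).
Proof.
move=> I ec.
have sub : forall d, eligible (elim_round s c) d -> eligible s d.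
  by move=> d; rewrite elig_elim => /andP [].
have nc : ~~ eligible (elim_round s c) c by rewrite elig_elim eqxx andbF.
split.
- rewrite /= -map_comp; apply: etrans (i1 I); apply: eq_map => b0 /=.
  by case: (b_pile b0 == Some c).
- move=> b /elim_mem [b0 [hb0 [[hp ->]|[hn ->]]]] /=.
    exact: moved_pile I hb0 hp sub nc.
  apply: (kept_pile I hb0 sub) => c' hp; rewrite elig_elim.
  have -> : c' != c by apply/eqP => E; apply: hn; rewrite hp E.
  by case: (pile_first I hb0 hp) => _ ->.
- by move=> b /elim_mem [b0 [hb0 [[hp ->]|[hn ->]]]] /=; exact: (i3 I hb0).
- by move=> b h /elim_mem [b0 [hb0 [[hp ->]|[hn ->]]]] /=; exact: (i4 I hb0).
- move=> b p /elim_mem [b0 [hb0 [[hp ->]|[hn ->]]]] /= hp'; last exact: (i5 I hb0 hp').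
  case: (i5 I hb0 hp) => [->|h]; [by left | right].
  apply: has_take_mono h; apply: ltnW; exact: moved_after I hb0 hp sub nc hp'.
- move=> d hd; rewrite /= in_setU in_set1 negb_or (i6 I hd) /=.
  apply/eqP => E; move: ec; rewrite /eligible -E hd //.
- rewrite /=; apply: le_trans (i7 I); rewrite lerD2r /Tot /= big_map.
  apply: ler_sumL => b0 hb0; rewrite /contrib.
  case: eqP => [hp|//] /=; rewrite hp.
  by case: (next_elig _ _ _) => //; case/andP: (i3 I hb0).
Qed.

Lemma step_inv s s' : stv_step Q s s' -> inv s -> inv s'.
Proof.
case=> [s0 _|s0 c _ ec _] I; [exact: quota_inv | exact: elim_inv].
Qed.


Lemma count_B (s : state) (P : pred (seq T)) : inv s ->
  count P B = count (fun b => P (b_ballot b)) (st_piles s).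
Proof. by move=> I; rewrite -{1}(i1 I) count_map. Qed.

Lemma head_first (s : state) b x : inv s -> List.In b (st_piles s) ->
  ohead (b_ballot b) = Some x -> eligible s x -> b_pile b = Some x /\ b_val b = 1.
Proof.
move=> I hb hh ex.
have hp : b_pile b = Some x.
  rewrite (i2 I hb); move: hh; case: (b_ballot b) => [|z β] //= [->]; by rewrite ex.
split => //; case: (i5 I hb hp) => // h.
by move: h hh; case: (b_ballot b) => [|z β] //= + [E]; rewrite E eqxx.
Qed.

Lemma AG_lt (s : state) x y : inv s -> holds B (AG R x y) ->
  eligible s x -> eligible s y -> Defs.tally s y < Defs.tally s x.
Proof.
move=> I /= H ex ey.
have up : Defs.tally s y <= (U_comp B y x)%:R.
  rewrite /U_comp (count_B _ I) -sum_count tally_mk; apply: ler_sumL => b hb.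
  case: eqP => [hp|_]; last by rewrite ler0n.
  have [yb _ tk] := pile_first I hb hp.
  have -> : ohead (sigma [set y; x] (b_ballot b)) == Some y.
    apply/eqP/first_filterP; split => //; first by rewrite !inE eqxx.
    move=> d hd; rewrite !inE negb_or; apply/andP; split.
      by apply/eqP => E; move: hd; rewrite E; apply/negP; exact: take_index_notin.
    by apply/eqP => E; move: (tk d hd); rewrite E ex.
  by case/andP: (i3 I hb).
have lo : ((L_basic B x)%:R : R) <= Defs.tally s x.
  rewrite /L_basic (count_B _ I) -sum_count tally_mk; apply: ler_sumL => b hb.
  case: eqP => [hh|_]; last by case: (_ == _) => //; case/andP: (i3 I hb).
  by have [-> ->] := head_first I hb hh ex; rewrite eqxx.
apply: le_lt_trans up _; apply: lt_le_trans lo; by rewrite ltr_nat.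
Qed.

Lemma Lelim_ball (s : state) o (O' : {set T}) b : inv s -> List.In b (st_piles s) ->
  eligible s o -> (forall d, d \in O' -> d \notin st_seated s) ->
  ohead (sigma (~: O') (b_ballot b)) = Some o ->
  exists p, [/\ b_pile b = Some p, b_val b = 1 &
     ((forall d, d \in O' -> ~~ eligible s d) -> p = o)].
Proof.
move=> I hb eo nS /first_filterP [ob _ tko].
case hp: (b_pile b) => [p|].
  have [pb ep tkp] := pile_first I hb hp.
  have ipo : (index p (b_ballot b) <= index o (b_ballot b))%N.
    rewrite leqNgt; apply/negP => H.
    have : o \in take (index p (b_ballot b)) (b_ballot b) by rewrite in_take.
    by move/tkp; rewrite eo.
  exists p; split => //.
    case: (i5 I hb hp) => // /hasP [d hd ds].
    have : d \in take (index o (b_ballot b)) (b_ballot b).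
      have db := mem_take hd; rewrite (in_take _ db) in hd; rewrite (in_take _ db); exact: leq_trans hd ipo.
    by move/tko; rewrite inE negbK => /nS; rewrite ds.
  move=> nE; case: (ltngtP (index p (b_ballot b)) (index o (b_ballot b))) => H.
  - have : p \in take (index o (b_ballot b)) (b_ballot b) by rewrite in_take.
    by move/tko; rewrite inE negbK => /nE; rewrite ep.
  - by rewrite ltnNge ipo in H.
  - have : nth o (b_ballot b) (index p (b_ballot b)) = nth o (b_ballot b) (index o (b_ballot b)) by rewrite H.
    by rewrite !nth_index.
move: hp; rewrite (i2 I hb) => /first_filter_none /(_ o ob); by rewrite eo.
Qed.

Lemma Lelim_tally (s : state) o (O' : {set T}) : inv s -> eligible s o ->
  (forall d, d \in O' -> d \notin st_seated s) -> (forall d, d \in O' -> ~~ eligible s d) ->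
  ((L_elim B o O')%:R : R) <= Defs.tally s o.
Proof.
move=> I eo nS nE.
rewrite /L_elim (count_B _ I) -sum_count tally_mk; apply: ler_sumL => b hb.
case: eqP => [hh|_]; last by case: (_ == _) => //; case/andP: (i3 I hb).
have [p [hp -> po]] := Lelim_ball I hb eo nS hh.
by rewrite hp (po nE) eqxx.
Qed.

Lemma Lelim_Tot (s : state) o (O' : {set T}) : inv s -> eligible s o ->
  (forall d, d \in O' -> d \notin st_seated s) ->
  ((L_elim B o O')%:R : R) <= Tot s.
Proof.
move=> I eo nS.
rewrite /L_elim (count_B _ I) -sum_count /Tot; apply: ler_sumL => b hb; rewrite /contrib.
case: eqP => [hh|_]; last by case: (b_pile b) => //; case/andP: (i3 I hb).
by have [p [-> -> _]] := Lelim_ball I hb eo nS hh.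
Qed.


Lemma bigmax_ge (h : R) (l : seq R) : h <= \big[Num.max/h]_(t <- l) t.
Proof.
elim: l => [|t l IH]; first by rewrite big_nil.
by rewrite big_cons le_max IH orbT.
Qed.

Lemma u_ge0 y o x (G : {set T}) β : 0 <= u_complex y o [set x] (fun _ => tau) G β.
Proof.
rewrite /u_complex; do !case: ifP => //.
move=> _ _ _ _; apply: le_trans (bigmax_ge _ _).
by case: [seq _ <- _ | _] => //= *; exact: tau_ge0.
Qed.

Lemma before_elig (s : state) b y d : inv s -> List.In b (st_piles s) ->
  b_pile b = Some y -> eligible s d -> d != y ->
  ohead (sigma [set d; y] (b_ballot b)) = Some d -> False.
Proof.
move=> I hb hp ed ndy /first_filterP [db _ tkd].
have [yb ey tky] := pile_first I hb hp.
have ydy : y \notin take (index d (b_ballot b)) (b_ballot b).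
  by apply/negP => /tkd; rewrite !inE eqxx orbT.
rewrite in_take // -leqNgt in ydy.
case: (ltngtP (index d (b_ballot b)) (index y (b_ballot b))) => H.
- have : d \in take (index y (b_ballot b)) (b_ballot b) by rewrite in_take.
  by move/tky; rewrite ed.
- by rewrite leqNgt H in ydy.
- have : nth d (b_ballot b) (index d (b_ballot b)) = nth d (b_ballot b) (index y (b_ballot b)) by rewrite H.
  by rewrite !nth_index // => E; rewrite E eqxx in ndy.
Qed.

Lemma U_bound (s : state) x y o (G : {set T}) : inv s -> eligible s y -> eligible s o ->
  o != y -> y \notin G -> x != y -> x \notin st_elim s ->
  (forall g, g \in G -> g != x -> eligible s g) ->
  Defs.tally s y <= U_complex B y o [set x] (fun _ => tau) G.
Proof.
move=> I ey eo noy yG nxy xE eG.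
rewrite /U_complex -(i1 I) big_map tally_mk; apply: ler_sumL => b hb.
case: eqP => [hp|_]; last exact: u_ge0.
have [yb _ tky] := pile_first I hb hp.
have [v0 v1] := andP (i3 I hb).
rewrite /u_complex.
have -> : [exists g in G :\: [set x], ohead (sigma [set g; y] (b_ballot b)) == Some g] = false.
  apply/existsP => -[g /andP [hg /eqP hs]].
  move: hg; rewrite !inE => /andP [gx gG].
  have gy : g != y by apply/eqP => E; rewrite -E gG in yG.
  exact: (before_elig I hb hp (eG g gG gx) gy hs).
rewrite yb /=.
have -> : (ohead (sigma [set o; y] (b_ballot b)) == Some o) = false.
  by apply/negP => /eqP h; exact: (before_elig I hb hp eo noy h).
case hh: (ohead (b_ballot b)) => [h|//].
case: ifP => // hx; move: hx; rewrite inE => /eqP E; subst h.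
have sx : x \in st_seated s.
  have : x \in take (index y (b_ballot b)) (b_ballot b).
    by move: hh; case: (b_ballot b) => [|z β] //= [->]; rewrite (negbTE nxy) /= mem_head.
  move/tky; rewrite /eligible negb_and !negbK (negbTE xE) orbF //.
apply: le_trans (i4 I hb hh sx) _; apply: le_trans (bigmax_ge _ _).
by move: hh; case: (b_ballot b) => [|z β] //= [->]; rewrite (negbTE nxy) /= inE eqxx.
Qed.


Lemma step_elig (s s' : state) d : stv_step Q s s' -> eligible s' d -> eligible s d.
Proof.
case=> [s0 _|s0 c _ _ _]; [rewrite elig_quota | rewrite elig_elim]; by case/andP.
Qed.

Lemma step_seated (s s' : state) d : stv_step Q s s' -> d \in st_seated s -> d \in st_seated s'.
Proof. by case=> [s0 _|s0 c _ _ _] //= h; rewrite in_setU h. Qed.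

Lemma step_elim (s s' : state) d : stv_step Q s s' -> d \in st_elim s -> d \in st_elim s'.
Proof. by case=> [s0 _|s0 c _ _ _] //= h; rewrite in_setU h. Qed.

Lemma count_seated (s : state) W d : stv_count 2 B s W -> d \in st_seated s -> d \in W.
Proof.
elim=> {s W} [s _|s s' W _ st _ IH] h.
  by rewrite /final_result; case: ifP => // _; rewrite in_setU h.
exact: IH (step_seated st h).
Qed.

Lemma count_elim (s : state) W d : inv s -> stv_count 2 B s W -> d \in st_elim s -> d \notin W.
Proof.
move=> I sC; elim: sC I => {s W} [s _|s s' W _ st _ IH] I h.
  rewrite /final_result; case: ifP => _.
    by apply/negP => /(i6 I); rewrite h.
  rewrite in_setU negb_or; apply/andP; split; first by apply/negP => /(i6 I); rewrite h.
  by rewrite inE /eligible h andbF.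
exact: IH (step_inv st I) (step_elim st h).
Qed.

Lemma card3 (A : {set T}) a b c : a \in A -> b \in A -> c \in A ->
  a != b -> a != c -> b != c -> (3 <= #|A|)%N.
Proof.
move=> ha hb hc ab ac bc.
have -> : 3%N = #|a |: (b |: [set c])|.
  rewrite cardsU1 cardsU1 cards1 !inE negb_or ab ac bc //.
apply: subset_leq_card; apply/subsetP => d; rewrite !inE.
by case/orP => [/eqP->|/orP[/eqP->|/eqP->]].
Qed.

Lemma case1 c x1 x2 : x1 != x2 -> x1 != c -> x2 != c ->
  holds B (AG R x1 c) -> holds B (AG R x2 c) ->
  forall (s : state) W, inv s -> stv_count 2 B s W -> c \in W ->
  c \notin st_seated s -> x1 \notin st_elim s -> x2 \notin st_elim s -> False.
Proof.
move=> n12 n1c n2c A1 A2 s W I sC; elim: sC I => {s W} [s Ht|s s' W nT st sC' IH] I cW cS x1E x2E.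
  move: cW; rewrite /final_result; case: ifP => h2 cW; first by rewrite cW in cS.
  move: Ht; rewrite /terminal h2 /= => /eqP Hc.
  have inSE : forall d, d \notin st_elim s -> d \in st_seated s :|: elig_set s.
    by move=> d dE; rewrite in_setU inE /eligible dE andbT; case: (d \in st_seated s).
  have := card3 (inSE _ x1E) (inSE _ x2E) cW n12 n1c n2c.
  have := (leq_card_setU (st_seated s) (elig_set s)).1.
  rewrite Hc; move: h2; rewrite leqNgt => /negbFE h2; lia.
have cE : c \notin st_elim s.
  by apply/negP => /(step_elim st) => h; move: cW; rewrite (negbTE (count_elim (step_inv st I) sC' h)).
have ec : eligible s c by apply/andP.
have I' := step_inv st I.
destruct st as [s0 hR|s0 d hR ed hmin].
- apply: (IH I' cW) => //=.
  rewrite in_setU negb_or cS /=; apply/negP => cR.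
  move: (cR); rewrite reachingP => /andP [_ hQ].
  have inS : forall x, holds B (AG R x c) -> x \notin st_elim s0 -> x \in st_seated s0 :|: reaching Q s0.
    move=> x Ax xE; rewrite in_setU; case sx: (x \in st_seated s0) => //=.
    have ex : eligible s0 x by apply/andP; rewrite sx.
    rewrite reachingP ex /=; apply: le_trans hQ _; apply: ltW; exact: AG_lt I Ax ex ec.
  have cS' : c \in st_seated s0 :|: reaching Q s0 by rewrite in_setU cR orbT.
  have := card3 (inS _ A1 x1E) (inS _ A2 x2E) cS' n12 n1c n2c.
  by have := seated_le2 I'; rewrite /= => h1 h2; move: (leq_trans h2 h1).
- apply: (IH I' cW) => //=.
    rewrite in_setU in_set1 negb_or x1E /=; apply/eqP => E; subst d.
    by have := AG_lt I A1 ed ec; rewrite ltNge hmin.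
  rewrite in_setU in_set1 negb_or x2E /=; apply/eqP => E; subst d.
  by have := AG_lt I A2 ed ec; rewrite ltNge hmin.
Qed.


Section Case2.
Variables (o x y : T) (O G : {set T}).
Local Notation L := (L_elim B o (O :\ x)).
Local Notation U := (U_complex B y o [set x] (fun _ => tau) G).
Hypotheses (hxy : x != y) (hox : o != x) (hoy : o != y) (hyG : y \notin G)
  (hNL : U < L%:R)
  (hAGo : forall o', o' \in O -> holds B (AG R o o'))
  (hAGg : forall g, g \in G -> holds B (AG R g y)).

Definition J (s : state) : Prop :=
  [/\ eligible s o, (forall o', o' \in O -> o' \notin st_seated s),
      (eligible s y -> forall g, g \in G -> g != x -> eligible s g)
    & (y \in st_seated s -> Q%:R <= U)].

Lemma case2 (s : state) W : inv s -> stv_count 2 B s W -> W = [set x; y] -> J s -> False.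
Proof.
move=> I sC; elim: sC I => {s W} [s Ht|s s' W nT st sC' IH] I EW [Jo JO JG JY].
  move: EW; rewrite /final_result; case: ifP => h2 EW.
    have yS : y \in st_seated s by rewrite EW !inE eqxx orbT.
    have hU := JY yS.
    have nS : forall d, d \in O :\ x -> d \notin st_seated s.
      by move=> d; rewrite !inE => /andP [_ /JO].
    have hL := Lelim_Tot I Jo nS.
    have h7 := i7 I; rewrite EW cards2 hxy /= in h7.
    have QL : (Q < L)%N by rewrite -(ltr_nat R); apply: le_lt_trans hU hNL.
    have : ((L + Q * 2)%N%:R : R) <= (size B)%:R.
      by rewrite natrD; apply: le_trans h7; rewrite lerD2r.
    rewrite ler_nat => h; have := sizeB_lt; lia.
  have : o \in st_seated s :|: elig_set s by rewrite in_setU inE Jo orbT.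
  by rewrite EW !inE (negbTE hox) (negbTE hoy).
have I' := step_inv st I.
have sW : forall d, d \in st_seated s' -> d = x \/ d = y.
  by move=> d /(count_seated sC'); rewrite EW !inE => /orP [/eqP|/eqP]; [left|right].
have xE : x \notin st_elim s.
  apply/negP => /(step_elim st) /(count_elim I' sC'); by rewrite EW !inE eqxx.
have yE : y \notin st_elim s.
  apply/negP => /(step_elim st) /(count_elim I' sC'); by rewrite EW !inE eqxx orbT.
have oS' : o \notin st_seated s'.
  by apply/negP => /sW [E|E]; [move: hox | move: hoy]; rewrite E eqxx.
apply: (IH I' EW).
destruct st as [s0 hR|s0 d hR ed hmin].
- have oR : o \notin reaching Q s0.
    by apply/negP => h; move: oS'; rewrite /= in_setU h orbT.
  split.
  + by rewrite elig_quota Jo.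
  + move=> o' hO; rewrite /= in_setU negb_or JO //=; apply/negP => hR'.
    move: (hR'); rewrite reachingP => /andP [eo' hQ].
    move: oR; rewrite reachingP Jo /= => /negP; apply.
    apply: le_trans hQ _; apply: ltW; exact: AG_lt I (hAGo hO) Jo eo'.
  + move=> ey g gG gx; rewrite elig_quota (JG (step_elig (StepQuota hR) ey) g gG gx) /=.
    apply/negP => gR.
    have : g \in st_seated (quota_round Q s0) by rewrite /= in_setU gR orbT.
    case/sW => E; first by rewrite E eqxx in gx.
    by move: hyG; rewrite -E gG.
  + rewrite /= in_setU => /orP [/JY //|yR].
    move: (yR); rewrite reachingP => /andP [ey hQ].
    apply: le_trans hQ _; apply: U_bound => //.
    exact: JG ey.
- have od : o != d.
    apply/eqP => E; subst d.
    have nE : forall d, d \in O :\ x -> ~~ eligible s0 d.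
      move=> d; rewrite !inE => /andP [_ hO]; apply/negP => ed'.
      by have := AG_lt I (hAGo hO) ed ed'; rewrite ltNge hmin.
    have nS : forall d, d \in O :\ x -> d \notin st_seated s0.
      by move=> d; rewrite !inE => /andP [_ /JO].
    have hL := Lelim_tally I Jo nS nE.
    case ey: (eligible s0 y).
      have hU := U_bound I ey Jo hoy hyG hxy xE (JG ey).
      have := lt_le_trans (le_lt_trans hU hNL) hL.
      by rewrite ltNge hmin.
    have yS : y \in st_seated s0.
      by move: ey; rewrite /eligible yE andbT; case: (y \in st_seated s0).
    have hQ : (Q%:R : R) <= Defs.tally s0 o.
      apply: le_trans hL; apply: ltW; apply: le_lt_trans (JY yS) hNL.
    have : o \in reaching Q s0 by rewrite reachingP Jo.
    by rewrite hR inE.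
  split.
  + by rewrite elig_elim Jo od.
  + exact: JO.
  + move=> ey g gG gx; have ey0 := step_elig (StepElim hR ed hmin) ey.
    rewrite elig_elim (JG ey0 g gG gx) /=; apply/eqP => E; subst d.
    by have := AG_lt I (hAGg gG) ed ey0; rewrite ltNge hmin.
  + exact: JY.
Qed.

End Case2.

End Main.

Lemma In_cat (X : Type) a (l1 l2 : seq X) : List.In a l1 \/ List.In a l2 -> List.In a (l1 ++ l2).
Proof.
elim: l1 => [|z l1 IH] /=; first by case.
case=> [[E|h]|h]; [by left | right; apply: IH; by left | right; apply: IH; by right].
Qed.

Lemma In_flat (X : eqType) (Y : Type) (f : X -> seq Y) (s : seq X) x a :
  x \in s -> List.In a (f x) -> List.In a (flatten (map f s)).
Proof.
elim: s => [|z s IH] //=; rewrite in_cons => /orP [/eqP <-|h] ha; apply: In_cat; [by left | right].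
exact: IH.
Qed.

Lemma In_map_mem (X : eqType) (Y : Type) (f : X -> Y) (s : seq X) x :
  x \in s -> List.In (f x) (map f s).
Proof.
elim: s => [|z s IH] //=; rewrite in_cons => /orP [/eqP <-|h]; [by left | right; exact: IH].
Qed.

Unset Implicit Arguments.
Set Strict Implicit.

Theorem theorem1 (R : realFieldType) (T : finType) (B Rec : seq (seq T))
  (w1 w2 : T) (cost : seq (assertion R T) -> R) (A : seq (assertion R T)) :
  all uniq B ->
  w1 != w2 ->
  FindAuditableAssertions Rec cost w1 w2 A ->
  (forall a, List.In a A -> holds B a) ->
  forall W : {set T}, stv_outcome R 2 B W ->
  forall c1 c2 : T, c1 != c2 -> [set c1; c2] != [set w1; w2] ->
  W != [set c1; c2].
Proof.
move=> _ nw [chNW [chP [hNW hP hA]]] hold W out c1 c2 n12 nP; apply/eqP => EW.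
have I0 := init_inv R B.
case: (boolP [disjoint [set c1; c2] & NW Rec]) => hd; last first.
  move: hd; rewrite -setI_eq0 => /set0Pn [c]; rewrite inE => /andP [cP cNW].
  have [[n12' A1 A2] _] := hNW c cNW.
  have inG : forall a, List.In a (groupNW R c (chNW c)) -> holds B a.
    move=> a ha; apply: hold; rewrite hA; apply: In_cat; left.
    by apply: (In_flat _ _ (x := c)) => //; rewrite mem_enum.
  have H1 := inG _ (or_introl erefl).
  have H2 := inG _ (or_intror (or_introl erefl)).
  move: A1 A2; rewrite /AG_rec => /andP [n1c _] /andP [n2c _].
  by apply: (case1 n12' n1c n2c H1 H2 I0 out); [rewrite EW | rewrite inE..].
have PC : [set c1; c2] \in cand_pairs Rec w1 w2.
  by rewrite inE cards2 n12 nP hd.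
have [vP _] := hP _ PC.
case E: (chP [set c1; c2]) vP => [[o x] y] [oP xP yP xy _].
have inG : forall a, List.In a (groupP R Rec (o, x, y)) -> holds B a.
  move=> a ha; apply: hold; rewrite hA; apply: In_cat; right.
  by apply: (In_flat _ _ (x := [set c1; c2])); rewrite ?mem_enum // E.
have hNL := inG _ (or_introl erefl).
have hAGo : forall o', o' \in O_of Rec o -> holds B (AG R o o').
  move=> o' ho; apply: inG; right; apply: In_cat; left.
  by apply: (In_map_mem (fun o' => AG R o o')); rewrite mem_enum.
have hAGg : forall g, g \in G_of Rec y -> holds B (AG R g y).
  move=> g hg; apply: inG; right; apply: In_cat; right.
  by apply: (In_map_mem (fun g => AG R g y)); rewrite mem_enum.
have hyG : y \notin G_of Rec y by rewrite inE /AG_rec eqxx.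
have hox : o != x by apply/eqP => E'; rewrite E' xP in oP.
have hoy : o != y by apply/eqP => E'; rewrite E' yP in oP.
have EW' : W = [set x; y].
  rewrite EW; apply/eqP; rewrite eq_sym eqEcard; apply/andP; split.
    by apply/subsetP => d /set2P [->|->].
  by rewrite !cards2 n12 xy.
apply: (case2 xy hox hoy hyG hNL hAGo hAGg I0 out EW').
split.
- by rewrite /eligible /= !inE.
- by move=> o' _; rewrite inE.
- by move=> _ g _ _; rewrite /eligible /= !inE.
- by rewrite inE.
Qed.
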